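(* Let $m$ be a positive integer and $\sigma$ a composition of $m$. The maps $\Phi_\sigma:\Delta(\mathcal{T},m)\to\Gamma(\mathsf{hypo},\sigma)$, $Q\mapsto\pi_\sigma(Q)$, and $\Gamma(\mathsf{hypo},\sigma)\to\Delta(\mathcal{T},m)$, $T\mapsto\overline{T}$, are mutually inverse isomorphisms of unlabelled directed graphs.
   Context: Entries are positive integers. A quasi-array of size $m$ is an array $Q$ with cells $(i,j)$, $1\le i\le m$, $1\le j\le m-i+1$, each containing a positive integer $Q_{(i,j)}$, with $Q_{(1,j)}\le Q_{(1,j+1)}$ and $Q_{(i,j)}=Q_{(1,i+j-1)}+i-1$. The $k$-th diagonal is the set of cells with $i+j-1=k$. For $Q$ of size $m$: $D_m$ is always defined and adds $1$ to every entry of the $m$-th diagonal; for $1\le k\le m-1$, $D_k$ is defined iff $Q_{(1,k)}<Q_{(1,k+1)}$, and then adds $1$ to all entries of the $k$-th diagonal; $D_k$ is undefined for $k>m$. $\Delta(\mathcal{T},m)$ is the directed graph whose vertices are the quasi-arrays of size $m$, with an edge $Q\to D_k(Q)$ labelled $k$ whenever $D_k$ is defined on $Q$. A quasi-ribbon tableau of shape $\sigma=(\sigma_1,\dots,\sigma_r)$ is a filling with positive integers of the diagram having $\sigma_i$ cells in row $i$, the leftmost cell of row $i+1$ directly below the rightmost cell of row $i$, weakly increasing along rows and strictly increasing down columns. Its column reading is the word read column by column left to right, each column bottom to top. Quasi-Kashiwara operators on words: if $u$ contains a subsequence $(i+1)\,i$, $f_i(u)$ is undefined; otherwise $f_i(u)$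 replaces the rightmost $i$ by $i+1$ (undefined if no $i$ occurs). $\Gamma(\mathsf{hypo},\sigma)$ is the directed graph whose vertices are the quasi-ribbon tableaux of shape $\sigma$ (identified with their column readings), with an edge $u\to f_i(u)$ labelled $i$ whenever $f_i(u)$ is defined ($i\ge1$); it is a connected component of the graph on all words. $\pi_\sigma(Q)$ is the quasi-ribbon tableau formed by the cells of $Q$ making up a quasi-ribbon diagram of shape $\sigma$ whose first cell is $(1,1)$, with their entries from $Q$. For a quasi-ribbon tableau $T$ of shape $\sigma$ with $m$ cells, $\overline{T}$ is the unique quasi-array of size $m$ with $\pi_\sigma(\overline{T})=T$ (obtained by placing $T$ with its top-left cell at $(1,1)$ and filling each diagonal as a sequence of consecutive integers increasing downward). *)

(* Defs.v *)
(* All indices below are 0-based. *)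
From mathcomp Require Import all_boot.
Set Implicit Arguments. Unset Strict Implicit. Unset Printing Implicit Defensive.

(* A quasi-array is stored as its list of rows; row i (0-based) has m - i
   cells.  Paper cell (i,j) (1-based) is qentry Q (i-1) (j-1). *)
Definition qentry (Q : seq (seq nat)) (i j : nat) : nat := nth 0 (nth [::] Q i) j.

Definition is_qarray (m : nat) (Q : seq (seq nat)) : Prop :=
  [/\ size Q = m,
      (forall i, i < m -> size (nth [::] Q i) = m - i),
      (forall i j, i < m -> j < m - i -> 0 < qentry Q i j),
      (forall j, j.+1 < m -> qentry Q 0 j <= qentry Q 0 j.+1) &
      (forall i j, i < m -> j < m - i -> qentry Q i j = qentry Q 0 (i + j) + i)].

(* D_k (k 1-based, as in the paper): adds 1 to every entry of the k-th
   diagonal, i.e. the cells (i,j) (0-based) with i + j + 1 = k. *)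
Definition Dop (k : nat) (Q : seq (seq nat)) : option (seq (seq nat)) :=
  let m := size Q in
  if (0 < k <= m) && ((k == m) || (qentry Q 0 k.-1 < qentry Q 0 k))
  then Some (mkseq (fun i => mkseq (fun j =>
          qentry Q i j + (if (i + j).+1 == k then 1 else 0))
          (size (nth [::] Q i))) m)
  else None.

Definition Delta_edge (Q Q' : seq (seq nat)) : Prop :=
  exists k, Dop k Q = Some Q'.

Definition is_composition (m : nat) (sigma : seq nat) : Prop :=
  sumn sigma = m /\ all (fun p => 0 < p) sigma.

(* cells of the ribbon diagram are numbered t = 0,...,m-1 in row reading
   order; cell t lies in row rowof sigma t and column colof sigma t
   (0-based; leftmost cell of row r+1 is below rightmost cell of row r). *)
Definition rowof (sigma : seq nat) (t : nat) : nat :=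
  nth 0 (flatten [seq nseq (nth 0 sigma r) r | r <- iota 0 (size sigma)]) t.
Definition colof (sigma : seq nat) (t : nat) : nat := t - rowof sigma t.

Definition ent (T : seq (seq nat)) (t : nat) : nat := nth 0 (flatten T) t.

Definition is_qrt (sigma : seq nat) (T : seq (seq nat)) : Prop :=
  let m := sumn sigma in
  [/\ map size T = sigma,
      (forall t, t < m -> 0 < ent T t),
      (forall t t', t < t' < m -> rowof sigma t = rowof sigma t' -> ent T t <= ent T t') &
      (forall t t', t < t' < m -> colof sigma t = colof sigma t' -> ent T t < ent T t')].

Definition colread (sigma : seq nat) (T : seq (seq nat)) : seq nat :=
  let m := sumn sigma in
  flatten [seq [seq ent T t | t <- rev (iota 0 m) & colof sigma t == c]
          | c <- iota 0 m].

Definition fop (i : nat) (u : seq nat) : option (seq nat) :=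
  if subseq [:: i.+1; i] u then None
  else if i \in u then Some (set_nth 0 u (size u - (index i (rev u)).+1) i.+1)
  else None.

Definition Gamma_edge (sigma : seq nat) (T T' : seq (seq nat)) : Prop :=
  exists i, 0 < i /\ fop i (colread sigma T) = Some (colread sigma T').

(* pi_sigma(Q): the cells of Q forming the ribbon of shape sigma starting at
   (1,1): cell t of ribbon row r is the cell (r, t - r) (0-based) of Q. *)
Definition piQ (sigma : seq nat) (Q : seq (seq nat)) : seq (seq nat) :=
  [seq [seq qentry Q r (t - r) | t <- iota (sumn (take r sigma)) (nth 0 sigma r)]
  | r <- iota 0 (size sigma)].

(* T-bar: place T at (1,1), fill each diagonal with consecutive integers
   increasing downward; diagonal t contains cell t of T in row rowof t. *)
Definition qbar (sigma : seq nat) (T : seq (seq nat)) : seq (seq nat) :=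
  let m := sumn sigma in
  mkseq (fun i => mkseq (fun j =>
     ent T (i + j) - rowof sigma (i + j) + i) (m - i)) m.

(* Main.v *)
Require Import Defs.
From mathcomp Require Import all_boot zify.
Set Implicit Arguments. Unset Strict Implicit. Unset Printing Implicit Defensive.

Definition rib (sigma : seq nat) (g : nat -> nat -> nat) : seq (seq nat) :=
  [seq [seq g r t | t <- iota (sumn (take r sigma)) (nth 0 sigma r)]
  | r <- iota 0 (size sigma)].

Lemma rib_cons a s g :
  rib (a :: s) g = [seq g 0 t | t <- iota 0 a] :: rib s (fun r t => g r.+1 (a + t)).
Proof.
rewrite /rib /=; congr (_ :: _).
rewrite (iotaDl 1 0) -map_comp; apply: eq_map => r /=.
by rewrite iotaDl -map_comp.
Qed.

Lemma shape_rib s g : shape (rib s g) = s.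
Proof.
rewrite /shape /rib -map_comp.
rewrite (eq_map (g := nth 0 s)); first exact: mkseq_nth.
by move=> r /=; rewrite size_map size_iota.
Qed.

Lemma rowof_cons a s t : t < a + sumn s ->
  rowof (a :: s) t = if t < a then 0 else (rowof s (t - a)).+1.
Proof.
move=> ht; rewrite /rowof /=.
rewrite (iotaDl 1 0) -map_comp.
rewrite (eq_map (g := map S \o (fun r => nseq (nth 0 s r) r))); last first.
  by move=> r /=; rewrite map_nseq.
rewrite map_comp.
rewrite -map_flatten nth_cat size_nseq nth_nseq.
case: ifP => hta; first by case: ifP.
have hsz : size (flatten [seq nseq (nth 0 s r) r | r <- iota 0 (size s)]) = sumn s.
  rewrite size_flatten /shape -map_comp.
  rewrite (eq_map (g := nth 0 s)); first by rewrite -/(mkseq _ _) mkseq_nth.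
  by move=> r /=; rewrite size_nseq.
rewrite (nth_map 0) // hsz; lia.
Qed.

Lemma rib_nth s g t : t < sumn s ->
  nth 0 (flatten (rib s g)) t = g (rowof s t) t.
Proof.
elim: s g t => [|a s IH] g t // ht; have ht' : t < a + sumn s := ht.
rewrite rib_cons /= nth_cat size_map size_iota rowof_cons //.
case: ifP => hta; first by rewrite (nth_map 0) ?size_iota // nth_iota.
rewrite IH; last by lia.
congr g; lia.
Qed.

Lemma rowof_le s t : all (fun p => 0 < p) s -> rowof s t <= t.
Proof.
elim: s t => [|a s IH] t /=; first by rewrite /rowof /= nth_nil.
move=> /andP[ha hs].
case: (ltnP t (a + sumn s)) => ht.
  rewrite rowof_cons //; case: ifP => // hta.
  have := IH (t - a) hs; lia.
rewrite /rowof nth_default //.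
rewrite size_flatten /shape -map_comp.
rewrite (eq_map (g := nth 0 (a :: s))); first by rewrite -/(mkseq _ _) mkseq_nth.
by move=> r /=; rewrite size_nseq.
Qed.

Lemma rowof_step s t : all (fun p => 0 < p) s -> t.+1 < sumn s ->
  rowof s t.+1 = rowof s t \/ rowof s t.+1 = (rowof s t).+1.
Proof.
elim: s t => [|a s IH] t //= /andP[ha hs] ht.
rewrite !rowof_cons //; last by lia.
case: (ltnP t.+1 a) => h1.
  by rewrite (_ : t < a = true); [left|apply/idP; lia].
case: (ltnP t a) => h2.
  have ->: t.+1 - a = 0 by lia.
  by right; have := rowof_le 0 hs; lia.
have := IH (t - a) hs; rewrite (_ : t.+1 - a = (t - a).+1); last by lia.
move=> H; have : (t - a).+1 < sumn s by lia.
by move/H => [->|->]; [left|right].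
Qed.


Lemma subseq2P (u : seq nat) (a b : nat) : a != b ->
  subseq [:: a; b] u <->
  exists p q, [/\ p < q, q < size u, nth 0 u p = a & nth 0 u q = b].
Proof.
move=> hab; rewrite (_ : subseq _ u = mem2 u a b); last by rewrite mem2E (negPf hab).
rewrite /mem2.
split.
  move=> hb.
  have ha : a \in u.
    case: (boolP (a \in u)) => // /negbTE h; move: (hb); rewrite drop_oversize // leqNgt index_mem h //.
  move: hb => /(nthP 0) [q' hq' hq].
  rewrite size_drop in hq'; rewrite nth_drop in hq.
  exists (index a u); exists (index a u + q'); split.
  - case: q' hq hq' => [|q'] hq hq'; last by lia.
    by rewrite addn0 nth_index // in hq; rewrite hq eqxx in hab.
  - by rewrite -ltn_subRL.
  - exact: nth_index.
  - exact: hq.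
move=> [p [q [hpq hq hp hb]]].
have hai : index a u <= p.
  rewrite leqNgt; apply/negP => h.
  by move: (before_find 0 h); rewrite /= -/(index a u) hp eqxx.
apply/(nthP 0); exists (q - index a u).
  rewrite size_drop; apply: ltn_sub2r => //; apply: leq_ltn_trans hai _; apply: ltn_trans hpq hq.
by rewrite nth_drop subnKC //; lia.
Qed.

Lemma lastocc (u : seq nat) (i : nat) : i \in u ->
  [/\ size u - (index i (rev u)).+1 < size u,
      nth 0 u (size u - (index i (rev u)).+1) = i &
      forall q, size u - (index i (rev u)).+1 < q -> q < size u -> nth 0 u q != i].
Proof.
move=> hi; set p := size u - (index i (rev u)).+1.
have hidx : index i (rev u) < size u by rewrite -size_rev index_mem mem_rev.
have e1 : nth 0 (rev u) (index i (rev u)) = nth 0 u p by rewrite nth_rev.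
split.
- rewrite /p; lia.
- by rewrite -e1 nth_index // mem_rev.
- move=> q hpq hq.
  have hn : size u - q.+1 < index i (rev u) by rewrite /p in hpq; lia.
  have := before_find 0 hn; rewrite /= nth_rev; last by lia.
  rewrite (_ : size u - (size u - q.+1).+1 = q) //; last by lia.
  by move/negbT.
Qed.

Section Order.
Variable r : rel nat.
Hypothesis r_irr : irreflexive r.
Hypothesis r_asym : forall x y, r x y -> ~~ r y x.

Lemma pw_nth (L : seq nat) p q : pairwise r L -> p < q -> q < size L ->
  r (nth 0 L p) (nth 0 L q).
Proof.
move=> /(pairwiseP 0) H hpq hq; apply: H => //; rewrite inE /=; lia.
Qed.

Lemma pw_index (L : seq nat) t t' : pairwise r L -> t \in L -> t' \in L ->
  r t t' -> index t L < index t' L.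
Proof.
move=> hL ht ht' hr.
rewrite ltnNge leq_eqVlt; apply/negP => /orP[/eqP e|h].
  have : nth 0 L (index t' L) = nth 0 L (index t L) by rewrite e.
  by rewrite !nth_index // => e'; rewrite e' r_irr in hr.
have := pw_nth hL h; rewrite !nth_index // index_mem => /(_ ht) h2.
by move: (r_asym hr); rewrite h2.
Qed.

Lemma pw_nth_inj (L : seq nat) p q : pairwise r L -> p < size L -> q < size L ->
  nth 0 L p = nth 0 L q -> p = q.
Proof.
move=> hL hp hq e; case: (ltngtP p q) => // h.
  by have := pw_nth hL h hq; rewrite e r_irr.
by have := pw_nth hL h hp; rewrite e r_irr.
Qed.
End Order.


Definition Lc (sigma : seq nat) : seq nat :=
  flatten [seq [seq t <- rev (iota 0 (sumn sigma)) | colof sigma t == c]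
          | c <- iota 0 (sumn sigma)].

Definition crel (sigma : seq nat) : rel nat := fun t t' =>
  (colof sigma t < colof sigma t') || ((colof sigma t == colof sigma t') && (t' < t)).

Lemma colread_Lc sigma T : colread sigma T = map (ent T) (Lc sigma).
Proof.
rewrite /colread /Lc map_flatten -map_comp; by [].

Qed.

Lemma mem_Lc sigma t : (t \in Lc sigma) = (t < sumn sigma).
Proof.
apply/flatten_mapP/idP => [[c _]|ht].
  by rewrite mem_filter mem_rev mem_iota => /andP[_ /andP[_ h]].
exists (colof sigma t).
  by rewrite mem_iota /colof; apply/andP; split=> //; lia.
by rewrite mem_filter eqxx mem_rev mem_iota /=.
Qed.

Lemma crel_irr sigma : irreflexive (crel sigma).
Proof. by move=> t; rewrite /crel ltnn ltnn andbF. Qed.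

Lemma crel_asym sigma x y : crel sigma x y -> ~~ crel sigma y x.
Proof.
rewrite /crel => /orP[h|/andP[/eqP h1 h2]]; apply/negP => /orP[h'|/andP[/eqP h1' h2']]; lia.
Qed.

Lemma pairwise_Lc sigma : pairwise (crel sigma) (Lc sigma).
Proof.
rewrite /Lc; set n := sumn sigma.
have hrev : pairwise (fun x y => y < x) (rev (iota 0 n)).
  rewrite -sorted_pairwise; last by move=> a b c h1 h2; lia.
  by rewrite rev_sorted; apply: iota_ltn_sorted.
suff H : forall k a, pairwise (crel sigma)
  (flatten [seq [seq t <- rev (iota 0 n) | colof sigma t == c] | c <- iota a k]) by apply: H.
elim=> [|k IH] a //=.
rewrite pairwise_cat IH andbT; apply/andP; split.
  apply/allrelP => x y; rewrite mem_filter => /andP[/eqP hx _].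
  move=> /flatten_mapP[c]; rewrite mem_iota mem_filter => hc /andP[/eqP hy _].
  by rewrite /crel hx hy; apply/orP; left; lia.
apply: (@sub_in_pairwise _ (fun t => colof sigma t == a) (fun x y => y < x)).
- by move=> x y /eqP hx /eqP hy h; rewrite /crel hx hy eqxx h orbT.
- by apply/allP => x; rewrite mem_filter => /andP[].
- exact: pairwise_filter.
Qed.


Section Edge.
Variables (m : nat) (row : nat -> nat) (L : seq nat) (r : rel nat) (q q' : nat -> nat).
Hypothesis hrow_le : forall t, row t <= t.
Hypothesis hrow_step : forall t, t.+1 < m -> row t.+1 = row t \/ row t.+1 = (row t).+1.
Hypothesis hr : forall t t', r t t' = (t - row t < t' - row t') || ((t - row t == t' - row t') && (t' < t)).
Hypothesis hpw : pairwise r L.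
Hypothesis hmem : forall t, (t \in L) = (t < m).
Hypothesis hq_pos : forall t, t < m -> 0 < q t.
Hypothesis hq_mono : forall t, t.+1 < m -> q t <= q t.+1.

Let e t := q t + row t.
Let e' t := q' t + row t.

Lemma r_irr : irreflexive r.
Proof. by move=> t; rewrite hr ltnn ltnn andbF. Qed.

Lemma r_asym x y : r x y -> ~~ r y x.
Proof.
rewrite !hr => /orP[h|/andP[/eqP h1 h2]]; apply/negP => /orP[h'|/andP[/eqP h1' h2']]; lia.
Qed.

Lemma mono_d d t : t + d < m ->
  [/\ row t <= row (t + d), row (t + d) <= row t + d & q t <= q (t + d)].
Proof.
elim: d => [|d IH] h; first by rewrite !addn0.
rewrite addnS in h *.
have h' : t + d < m by lia.
have [h1 h2 h3] := IH h'.
have := hrow_step h; have := hq_mono h; split; lia.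
Qed.

Lemma mono t t' : t' < m -> t <= t' ->
  row t <= row t' /\ row t' <= row t + (t' - t) /\ q t <= q t'.
Proof.
move=> h1 h2; have := @mono_d (t' - t) t; rewrite subnKC // => /(_ h1) [? ? ?]; by split.
Qed.

Lemma L_lt p : p < size L -> nth 0 L p < m.
Proof. by move=> hp; rewrite -hmem mem_nth. Qed.

Lemma index_lt t : t < m -> index t L < size L.
Proof. by move=> h; rewrite index_mem hmem. Qed.

Lemma nth_eL p : p < size L -> nth 0 (map e L) p = e (nth 0 L p).
Proof. by move=> h; rewrite (nth_map 0). Qed.

Lemma edge_equiv :
  (exists k, [/\ 0 < k <= m, (k == m) || (q k.-1 < q k) &
      forall t, t < m -> q' t = q t + (t.+1 == k)]) <->
  (exists i, 0 < i /\ fop i (map e L) = Some (map e' L)).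
Proof.
split.
- move=> [[|t0] [hk hkc hq']]; first by [].
  have ht0 : t0 < m by lia.
  have hkc' : t0.+1 = m \/ q t0 < q t0.+1 by case/orP: hkc => [/eqP|]; [left|right].
  have A : forall t, t < m -> e t = e t0 -> t <= t0.
    move=> t ht he; rewrite leqNgt; apply/negP => hlt.
    have := mono ht (ltnW hlt); have := @mono t0.+1 t ht hlt.
    rewrite /e in he; lia.
  have hC : e t0 \in map e L by apply: map_f; rewrite hmem.
  have hB : ~~ subseq [:: (e t0).+1; e t0] (map e L).
    apply/negP => H.
    have hne : (e t0).+1 != e t0 by rewrite neq_ltn ltnSn orbT.
    move: H => /(subseq2P _ hne) [p [p' [hpp' hp' hp hq]]].
    rewrite size_map in hp'.
    have hp0 : p < size L by lia.
    rewrite nth_eL // in hp; rewrite nth_eL // in hq.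
    have := pw_nth hpw hpp' hp'; rewrite hr.
    move: hp hq; set t := nth 0 L p; set t' := nth 0 L p' => hp hq.
    have ht : t < m by apply: L_lt.
    have ht' : t' < m by apply: L_lt.
    have ht'0 := A t' ht' hq.
    have M1 := mono ht' ; have M2 := mono ht; have M3 := mono ht0.
    have M4 := M3 t; have M5 := M2 t0; have M6 := M3 t'; have M7 := M2 t';
    have M8 := M1 t; have M9 := M2 t0.+1.
    move: hp hq; rewrite /e => hp hq.
    have R1 := hrow_le t; have R2 := hrow_le t'; have R3 := hrow_le t0.
    case/orP => [h|/andP[/eqP h1 h2]]; lia.
  exists (e t0); split; first by have := hq_pos ht0; rewrite /e; lia.
  rewrite /fop (negbTE hB) hC.
  have [hp hpv haft] := lastocc hC.
  move: hp hpv haft; set p := size _ - _ => hp hpv haft.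
  have hP0 := index_lt ht0.
  have hpe : p = index t0 L.
    have hnP0 : nth 0 (map e L) (index t0 L) = e t0 by rewrite nth_eL // nth_index // hmem.
    case: (ltngtP p (index t0 L)) => // h.
      by move: (haft _ h); rewrite size_map hnP0 eqxx => /(_ hP0).
    rewrite size_map in hp.
    move: hpv; rewrite nth_eL //; set t := nth 0 L p => hpv.
    have ht : t < m by apply: L_lt.
    have htt0 := A t ht hpv.
    have := pw_nth hpw h hp; rewrite nth_index ?hmem // hr -/t.
    have := mono ht0 htt0; rewrite /e in hpv.
    have R1 := hrow_le t; have R3 := hrow_le t0.
    move=> M /orP [h1|/andP[/eqP h1 h2]]; lia.
  congr Some; apply: (eq_from_nth (x0 := 0)).
    rewrite size_set_nth !size_map; apply/maxn_idPr; rewrite hpe; exact: hP0.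
  move=> n; rewrite size_set_nth size_map => hn.
  have hn' : n < size L by move: hn; rewrite hpe; lia.
  rewrite nth_set_nth /= (nth_map 0) // (nth_map 0) // /e' hq' ?L_lt // eqSS.
  case: eqP => [->|hne].
    by rewrite hpe nth_index ?hmem // eqxx /e; lia.
  have -> : (nth 0 L n == t0) = false.
    apply/negP => /eqP hnt; apply: hne; rewrite hpe.
    apply: (pw_nth_inj r_irr hpw hn' hP0); by rewrite nth_index ?hmem.
  by rewrite /e addn0.
- move=> [i [hi]]; rewrite /fop.
  case: ifP => // hsub; case: ifP => // hin [hf].
  have [hp hpv haft] := lastocc hin.
  move: hp hpv haft hf; set p := size _ - _ => hp hpv haft hf.
  rewrite size_map in hp.
  move: hpv; rewrite nth_eL //; set t0 := nth 0 L p => hpv.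
  have ht0 : t0 < m by apply: L_lt.
  have A : forall t, t < m -> e t = i -> t <= t0.
    move=> t ht he; rewrite leqNgt; apply/negP => hlt.
    have hP := index_lt ht.
    have hP' : index t L <= p.
      rewrite leqNgt; apply/negP => h.
      by move: (haft _ h); rewrite size_map nth_eL // nth_index ?hmem // he eqxx => /(_ hP).
    have hne : index t L != p.
      apply/eqP => hh; move: hlt; rewrite /t0 -hh nth_index ?hmem //; lia.
    have hlt' : index t L < p by lia.
    have := pw_nth hpw hlt' hp; rewrite nth_index ?hmem // hr -/t0.
    have := mono ht (ltnW hlt); rewrite /e in he hpv.
    have R1 := hrow_le t; have R3 := hrow_le t0.
    move=> M /orP [h1|/andP[/eqP h1 h2]]; lia.
  have Eq : forall t, t < m -> q' t = q t + (t == t0).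
    move=> t ht.
    have hP := index_lt ht.
    have := congr1 (fun s => nth 0 s (index t L)) hf.
    rewrite /= nth_set_nth /= (nth_map 0) // (nth_map 0) // !nth_index ?hmem // /e'.
    case: eqP => [hh|hne].
      have -> : t = t0 by rewrite /t0 -hh nth_index ?hmem.
      by rewrite eqxx -hpv /e; lia.
    have -> : (t == t0) = false.
      apply/negP => /eqP htt; apply: hne.
      apply: (pw_nth_inj r_irr hpw hP hp); by rewrite nth_index ?hmem.
    by rewrite /e; lia.
  exists t0.+1; split; first by lia.
    case: (ltnP t0.+1 m) => hm; last by rewrite (_ : t0.+1 = m) ?eqxx //; lia.
    apply/orP; right; rewrite ltnNge; apply/negP => /= hle.
    have [_ [_ hqm]] := mono hm (leqnSn t0).
    case: (hrow_step hm) => hrs.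
      have := A t0.+1 hm; rewrite /e hrs /= -hpv /e; lia.
    have hr1 : r t0.+1 t0 by rewrite hr hrs; apply/orP; right; apply/andP; split; [apply/eqP; lia | lia].
    have hm1 : t0.+1 \in L by rewrite hmem.
    have hm0 : t0 \in L by rewrite hmem.
    have hidx := pw_index r_irr r_asym hpw hm1 hm0 hr1.
    have hne : i.+1 != i by rewrite neq_ltn ltnSn orbT.
    move/negbT: hsub => /negP; apply; apply/(subseq2P _ hne).
    exists (index t0.+1 L), (index t0 L); split => //.
    + by rewrite size_map; apply: index_lt.
    + by rewrite nth_eL ?index_lt // nth_index ?hmem // /e hrs -hpv /e; lia.
    + by rewrite nth_eL ?index_lt // nth_index ?hmem // -hpv.
  by move=> t ht; rewrite eqSS; apply: Eq.
Qed.
End Edge.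


Lemma nat_mono (f : nat -> nat) m : (forall t, t.+1 < m -> f t <= f t.+1) ->
  forall t t', t <= t' -> t' < m -> f t <= f t'.
Proof.
move=> H t t' htt' ht'.
have K : forall d, t + d < m -> f t <= f (t + d).
  elim=> [|d IH] h; first by rewrite addn0.
  rewrite addnS in h *.
  have h' : t + d < m by lia.
  exact: leq_trans (IH h') (H _ h).
by have := K (t' - t); rewrite subnKC //; apply.
Qed.

Lemma piQ_rib sigma Q : piQ sigma Q = rib sigma (fun r t => qentry Q r (t - r)).
Proof. by []. Qed.

Lemma qbar_entry sigma T i j : i < sumn sigma -> j < sumn sigma - i ->
  qentry (qbar sigma T) i j = ent T (i + j) - rowof sigma (i + j) + i.
Proof. by move=> hi hj; rewrite /qentry /qbar nth_mkseq // nth_mkseq. Qed.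

Theorem theorem4p1 (m : nat) (sigma : seq nat) :
  0 < m -> is_composition m sigma ->
  [/\ (forall Q, is_qarray m Q -> is_qrt sigma (piQ sigma Q)),
      (forall T, is_qrt sigma T -> is_qarray m (qbar sigma T)),
      (forall Q, is_qarray m Q -> qbar sigma (piQ sigma Q) = Q),
      (forall T, is_qrt sigma T -> piQ sigma (qbar sigma T) = T) &
      (forall Q Q', is_qarray m Q -> is_qarray m Q' ->
         (Delta_edge Q Q' <-> Gamma_edge sigma (piQ sigma Q) (piQ sigma Q')))].
Proof.
move=> hm [hsum hpos].
set row := rowof sigma.
have hrow_le : forall t, row t <= t by move=> t; apply: rowof_le.
have hrow_step : forall t, t.+1 < m -> row t.+1 = row t \/ row t.+1 = (row t).+1.
  by move=> t ht; apply: rowof_step => //; rewrite hsum.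
have hrow_mono : forall t t', t <= t' -> t' < m -> row t <= row t'.
  apply: nat_mono => t h; case: (hrow_step t h) => ->; lia.
have hcol_mono : forall t t', t <= t' -> t' < m -> t - row t <= t' - row t'.
  apply: (nat_mono (f := fun t => t - row t)) => t h.
  have := hrow_le t; case: (hrow_step t h) => ->; lia.
have ent_piQ : forall Q, is_qarray m Q -> forall t, t < m ->
    ent (piQ sigma Q) t = qentry Q 0 t + row t.
  move=> Q [_ _ _ _ hQd] t ht.
  rewrite /ent piQ_rib rib_nth ?hsum // -/row.
  have := hrow_le t => hr.
  rewrite hQd; [by rewrite subnKC | lia | lia].
have q_mono : forall Q, is_qarray m Q -> forall t t', t <= t' -> t' < m ->
    qentry Q 0 t <= qentry Q 0 t'.
  by move=> Q [_ _ _ hQm _]; apply: nat_mono.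
have q_pos : forall Q, is_qarray m Q -> forall t, t < m -> 0 < qentry Q 0 t.
  by move=> Q [_ _ hQp _ _] t ht; apply: hQp; rewrite ?subn0.
have Tstep : forall T, is_qrt sigma T -> forall t, t.+1 < m ->
    (row t.+1 = row t /\ ent T t <= ent T t.+1) \/
    (row t.+1 = (row t).+1 /\ ent T t < ent T t.+1).
  move=> T [_ _ hTr hTc] t ht; rewrite hsum in hTr hTc.
  case: (hrow_step t ht) => hrs; [left|right]; split => //.
    by apply: hTr; [lia | by rewrite -/row hrs].
  apply: hTc; first by lia.
  by rewrite /colof -/row hrs; have := hrow_le t; lia.
have Tlow : forall T, is_qrt sigma T -> forall t, t < m -> row t < ent T t.
  move=> T hT; have [_ hTp _ _] := hT; rewrite hsum in hTp.
  elim=> [|t IH] ht; first by have := hrow_le 0; have := hTp 0 ht; lia.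
  have := IH (ltnW ht); have := Tstep T hT t ht; lia.
split.
-
  move=> Q hQ; split.
  + by rewrite piQ_rib; apply: shape_rib.
  + by move=> t; rewrite hsum => ht; rewrite ent_piQ //; have := q_pos Q hQ t ht; lia.
  + move=> t t'; rewrite hsum => /andP[htt' ht'] hrr.
    rewrite !ent_piQ //; last by lia.
    have := q_mono Q hQ t t' (ltnW htt') ht'; rewrite -/row in hrr; lia.
  + move=> t t'; rewrite hsum => /andP[htt' ht'] hcc.
    rewrite !ent_piQ //; last by lia.
    have := q_mono Q hQ t t' (ltnW htt') ht'; rewrite /colof -/row in hcc.
    have := hrow_le t; have := hrow_le t'; lia.
-
  move=> T hT; split.
  + by rewrite /qbar size_mkseq hsum.
  + by move=> i hi; rewrite /qbar nth_mkseq ?hsum // size_mkseq.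
  + move=> i j hi hj; rewrite qbar_entry ?hsum // -/row.
    have := Tlow T hT (i + j); lia.
  + move=> j hj; rewrite !qbar_entry ?hsum ?subn0 // -/row ?add0n; last by lia.
    have := Tlow T hT j; have := Tlow T hT j.+1; have := Tstep T hT j hj; lia.
  + move=> i j hi hj; rewrite !qbar_entry ?hsum ?subn0 // -/row ?add0n; lia.
-
  move=> Q hQ; have [hQs hQr _ _ hQd] := hQ.
  apply: (eq_from_nth (x0 := [::])); first by rewrite /qbar size_mkseq hsum hQs.
  move=> i; rewrite /qbar size_mkseq hsum => hi.
  rewrite nth_mkseq ?hsum //.
  apply: (eq_from_nth (x0 := 0)); first by rewrite size_mkseq hQr.
  move=> j; rewrite size_mkseq => hj.
  rewrite nth_mkseq // ent_piQ //; last by lia.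
  rewrite -/row; change (nth 0 (nth [::] Q i) j) with (qentry Q i j).
  rewrite (hQd i j) //; lia.
-
  move=> T hT; have [hsz _ _ _] := hT.
  have hshT : shape T = sigma by [].
  rewrite -{2}(flattenK T) hshT piQ_rib -{1}(flattenK (rib _ _)) shape_rib.
  congr reshape; apply: (eq_from_nth (x0 := 0)).
    by rewrite !size_flatten shape_rib hshT.
  move=> t; rewrite size_flatten shape_rib hsum => ht.
  have := hrow_le t; rewrite -/row => hrt.
  rewrite rib_nth ?hsum // -/row qbar_entry ?hsum; [|lia|lia].
  rewrite subnKC // -/row; have := Tlow T hT t ht; rewrite /ent; lia.
-
  move=> Q Q' hQ hQ'.
  have hr : forall t t', crel sigma t t' =
      (t - row t < t' - row t') || ((t - row t == t' - row t') && (t' < t)) by [].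
  have hmem : forall t, (t \in Lc sigma) = (t < m) by move=> t; rewrite mem_Lc hsum.
  have hqp : forall t, t < m -> 0 < qentry Q 0 t by apply: q_pos.
  have hqm : forall t, t.+1 < m -> qentry Q 0 t <= qentry Q 0 t.+1.
    by move=> t h; apply: q_mono.
  have EE := @edge_equiv m row (Lc sigma) (crel sigma) (fun t => qentry Q 0 t)
     (fun t => qentry Q' 0 t) hrow_le hrow_step hr (pairwise_Lc sigma) hmem hqp hqm.
  have Dchar : forall k, Dop k Q = Some Q' <-> [/\ 0 < k <= m,
      (k == m) || (qentry Q 0 k.-1 < qentry Q 0 k) &
      forall t, t < m -> qentry Q' 0 t = qentry Q 0 t + (t.+1 == k)].
    move=> k; have [hQs hQr _ _ hQd] := hQ; have [hQs' hQr' _ _ hQd'] := hQ'.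
    rewrite /Dop hQs; split.
    + case: ifP => // /andP[hk hc] [<-]; split => // t ht.
      by rewrite /qentry nth_mkseq // nth_mkseq ?hQr ?subn0.
    + move=> [hk hc hq]; rewrite hk hc /=; congr Some.
      apply: (eq_from_nth (x0 := [::])); first by rewrite size_mkseq hQs'.
      move=> i; rewrite size_mkseq => hi; rewrite nth_mkseq //.
      apply: (eq_from_nth (x0 := 0)); first by rewrite size_mkseq hQr // hQr'.
      move=> j; rewrite size_mkseq hQr // => hj; rewrite nth_mkseq //.
      change (qentry Q i j + ((i + j).+1 == k) = qentry Q' i j).
      rewrite (hQd i j) // (hQd' i j) // hq; lia.
  have Gchar : forall i, fop i (colread sigma (piQ sigma Q)) =
        Some (colread sigma (piQ sigma Q')) <->
      fop i (map (fun t => qentry Q 0 t + row t) (Lc sigma)) =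
        Some (map (fun t => qentry Q' 0 t + row t) (Lc sigma)).
    move=> i; rewrite !colread_Lc.
    have e1 : map (ent (piQ sigma Q)) (Lc sigma) =
        map (fun t => qentry Q 0 t + row t) (Lc sigma).
      by apply/eq_in_map => t; rewrite mem_Lc hsum => ht; rewrite ent_piQ.
    have e2 : map (ent (piQ sigma Q')) (Lc sigma) =
        map (fun t => qentry Q' 0 t + row t) (Lc sigma).
      by apply/eq_in_map => t; rewrite mem_Lc hsum => ht; rewrite ent_piQ.
    by rewrite e1 e2.
  rewrite /Delta_edge /Gamma_edge; split.
  + move=> [k /Dchar hk]; have [i [hi hf]] := (proj1 EE) (ex_intro _ k hk).
    by exists i; split => //; apply/Gchar.
  + move=> [i [hi /Gchar hf]]; have [k hk] := (proj2 EE) (ex_intro _ i (conj hi hf)).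
    by exists k; apply/Dchar.
Qed.
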